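(* Let $X$ be a finite set and let $(p_B)_{B\subseteq X}$ be nonnegative reals with $\sum_{B\subseteq X}p_B=1$. For $A\subseteq X$ let $\mathcal{S}_A=\{B\subseteq X : A\cap B\neq\emptyset \text{ and } A\cap (X\setminus B)\neq\emptyset\}$ and $s_A=\sum_{B\in\mathcal{S}_A}p_B$ (so $s_A=0$ whenever $|A|\le 1$). Then: \begin{enumerate} \item For all $A\subseteq X$, $\displaystyle s_A=\sum_{B\subseteq A}(-1)^{|B|}s_B$ (the sum including $B=\emptyset$ and $B=A$). \item If $A\subseteq X$ has odd cardinality, then $\displaystyle s_A=\sum_{\substack{B\subset A\\ |B|\text{ even}}}\frac{\mathbb{T}_{|A|-|B|}}{2^{|A|-|B|}}\,s_B$. \end{enumerate}
   Context: $p_B$ is interpreted as the probability that, at a given bi-allelic site, exactly the taxa in $B$ have state $1$ (and those in $X\setminus B$ have state $0$); $s_A$ is then the probability that the site is segregating (non-constant) over $A$. The tangent numbers $\mathbb{T}_k$ are defined by the power series $\tanh(x)=\sum_{k=0}^\infty \mathbb{T}_k\,\frac{x^k}{k!}$. *)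

(* Defs.v *)
From HB Require Import structures.
From mathcomp Require Import all_boot all_order all_algebra.
From mathcomp Require Import all_classical all_reals all_analysis.
Set Implicit Arguments. Unset Strict Implicit. Unset Printing Implicit Defensive.
Import Order.TTheory GRing.Theory Num.Theory.
Local Open Scope ring_scope.

Definition tanhR (R : realType) (x : R) : R :=
  (expR x - expR (- x)) / (expR x + expR (- x)).

(* Tangent numbers: tanh x = sum_k T_k x^k / k!, i.e. T_k = tanh^(k)(0). *)
Definition tangent_number (R : realType) (k : nat) : R :=
  derive1n k (@tanhR R) 0.

Definition segregating (X : finType) (A B : {set X}) : bool :=
  (A :&: B != finset.set0) && (A :&: ~: B != finset.set0).

Definition seg_prob (R : realType) (X : finType) (p : {set X} -> R) (A : {set X}) : R :=
  \sum_(B : {set X} | segregating A B) p B.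

(* Main.v *)
Require Import Defs.
From HB Require Import structures.
From mathcomp Require Import all_boot all_order all_algebra.
From mathcomp Require Import all_classical all_reals all_analysis.
From mathcomp Require Import ring lra zify.
Import Order.TTheory GRing.Theory Num.Theory.
Local Open Scope ring_scope.

Section A.
Variable R : realType.

Lemma dlin (c x : R) : is_derive x 1 (fun y : R => c * y) c.
Proof.
have H : is_derive x 1 (fun y : R => c * y) (c *: (1:R)) := is_deriveZ c (is_derive_id x 1).
by rewrite -[X in is_derive _ _ _ X]mulr1.
Qed.

Lemma dexpc (c x : R) : is_derive x 1 (fun y => expR (c * y)) (expR (c*x) * c).
Proof.
exact: (is_derive1_comp (f:=expR) (is_derive_expR _) (dlin c x)).
Qed.

Definition Q (a b d c1 c2 : R) := fun x => a + b * expR (c1 * x) + d * expR (c2 * x).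

Lemma dQ (a b d c1 c2 x : R) : is_derive x 1 (Q a b d c1 c2) (Q 0 (b*c1) (d*c2) c1 c2 x).
Proof.
have H := is_deriveD (is_deriveD (is_derive_cst a x 1) (is_deriveZ b (dexpc c1 x)))
   (is_deriveZ d (dexpc c2 x)).
have E : Q 0 (b*c1) (d*c2) c1 c2 x = (0 + b *: (expR (c1 * x) * c1) + d *: (expR (c2 * x) * c2)).
  rewrite /Q /=. rewrite -[b *: _]/(b * _) -[d *: _]/(d * _). by rewrite !mulrA !(mulrAC _ _ (expR _)).
rewrite E; exact: H.
Qed.

Lemma derive1Q (a b d c1 c2 : R) : derive1 (Q a b d c1 c2) = Q 0 (b*c1) (d*c2) c1 c2.
Proof. by apply/funext => x; rewrite derive1E; have [_ ->] := dQ a b d c1 c2 x. Qed.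

Lemma derive1nQ n (a b d c1 c2 : R) : derive1n n (Q a b d c1 c2) =
   Q (if n == 0%N then a else 0) (b*c1^+n) (d*c2^+n) c1 c2.
Proof.
elim: n => [|n IH]; first by rewrite /= !expr0 !mulr1.
by rewrite derive1nS IH derive1Q !exprS !(mulrC c1) !(mulrC c2) !mulrA.
Qed.

Definition Nf := Q 0 1 (-1) 1 (-1).
Definition Df := Q 0 1 1 1 (-1).

Lemma Df_gt0 (x : R) : 0 < Df x.
Proof. by rewrite /Df /Q add0r !mul1r addr_gt0 // expR_gt0. Qed.

Lemma tanhE : @tanhR R = fun y => Nf y * (Df y)^-1.
Proof. by apply/funext => y; rewrite /tanhR /Nf /Df /Q !add0r !mul1r !mulN1r. Qed.

Lemma dtanh (x : R) : is_derive x 1 (@tanhR R) (1 - tanhR x ^+ 2).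
Proof.
have HN := dQ 0 1 (-1) 1 (-1) x.
have HD := dQ 0 1 1 1 (-1) x.
have HV := is_deriveV (lt0r_neq0 (Df_gt0 x)) HD.
have HM := is_deriveM HN HV.
set v := (X in is_derive _ _ _ X) in HM.
have -> : 1 - tanhR x ^+ 2 = v.
  rewrite /v; have := Df_gt0 x; rewrite tanhE /Df /Nf /Q /= => H.
  rewrite -![_ *: _]/(_ * _).
  have H1 := expR_gt0 (1 * x); have H2 := expR_gt0 (-1 * x).
  set e1 := expR (1 * x) in H H1 H2 *; set e2 := expR (-1 * x) in H H1 H2 *.
  by field; rewrite lt0r_neq0 // addr_gt0.
rewrite tanhE; exact: HM.
Qed.

Fixpoint Pt (n : nat) : {poly R} :=
  if n is m.+1 then (Pt m)^`() * (1 - 'X^2) else 'X.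

Lemma derive1n_tanh n : derive1n n (@tanhR R) = horner (Pt n) \o (@tanhR R).
Proof.
elim: n => [|n IH]; first by apply/funext => y /=; rewrite hornerX.
rewrite derive1nS IH; apply/funext => x.
have H := is_derive1_comp (is_derive_poly (Pt n) (tanhR x)) (dtanh x).
rewrite derive1E; have [_ ->] := H.
by rewrite /= hornerM hornerD hornerN hornerXn hornerC.
Qed.

Lemma smooth_tanh k (x : R) : derivable (derive1n k (@tanhR R)) x 1.
Proof.
rewrite derive1n_tanh.
by case: (is_derive1_comp (is_derive_poly (Pt k) (tanhR x)) (dtanh x)).
Qed.

Lemma smooth_Q (a b d c1 c2 : R) k (x : R) : derivable (derive1n k (Q a b d c1 c2)) x 1.
Proof. by rewrite derive1nQ; case: (dQ (if k == 0%N then a else 0) (b*c1^+k) (d*c2^+k) c1 c2 x). Qed.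

Lemma tw : (fun y => tanhR y * Q 1 (1/2) (1/2) 2 (-2) y) = Q 0 (1/2) (-1/2) 2 (-2).
Proof.
apply/funext => y; rewrite /tanhR /Q.
rewrite (_ : -2 * y = - (2 * y)); last by ring.
rewrite !expRN (expRM_natl 2).
have e0 := expR_gt0 y; move: e0; set e := expR y => e0.
rewrite add0r; field.
by rewrite !lt0r_neq0 // ?addr_gt0 // mulr_gt0.
Qed.
Lemma pascal (a b : nat -> R) n :
  \sum_(k < n.+1) 'C(n,k)%:R * (a k * b (n-k)%N.+1 + b (n-k)%N * a k.+1) =
  \sum_(k < n.+2) 'C(n.+1,k)%:R * (a k * b (n.+1-k)%N).
Proof.
rewrite [RHS]big_ord_recl.
under [in RHS]eq_bigr => i _ do rewrite lift0 binS natrD mulrDl subSS.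
rewrite big_split /=.
under [in LHS]eq_bigr => i _ do rewrite mulrDr.
rewrite [in LHS]big_split /= addrA; congr (_ + _); last first.
  by apply: eq_bigr => i _; rewrite (mulrC (b _)).
rewrite big_ord_recl [X in _ = _ + X]big_ord_recr /= !bin0 !subn0.
rewrite bin_small // mul0r addr0; congr (_ + _).
apply: eq_bigr => i _; rewrite -[bump 0 i]/(i.+1); congr (_ * (_ * b _)).
by rewrite subnSK.
Qed.

Lemma leibniz (f g : R -> R) (hf : forall k x, derivable (derive1n k f) x 1)
  (hg : forall k x, derivable (derive1n k g) x 1) n x :
  derive1n n (fun y => f y * g y) x =
  \sum_(k < n.+1) 'C(n,k)%:R * (derive1n k f x * derive1n (n-k)%N g x).
Proof.
elim: n x => [|n IH] x.
  by rewrite big_ord_recl big_ord0 /= addr0 mul1r.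
rewrite derive1nS.
have -> : derive1n n (fun y => f y * g y) =
   \sum_(k < n.+1) (fun y => 'C(n,k)%:R * (derive1n k f y * derive1n (n-k)%N g y)).
  by rewrite fct_sumE; apply/funext => y; exact: IH.
have D : forall k : 'I_n.+1, is_derive x 1
   (fun y => 'C(n,k)%:R * (derive1n k f y * derive1n (n-k)%N g y))
   ('C(n,k)%:R * (derive1n k f x * derive1n (n-k)%N.+1 g x +
                  derive1n (n-k)%N g x * derive1n k.+1 f x)).
  move=> k.
  have Df : is_derive x 1 (derive1n k f) (derive1n k.+1 f x).
    by apply: DeriveDef; [exact: hf| rewrite derive1nS derive1E].
  have Dg : is_derive x 1 (derive1n (n-k)%N g) (derive1n (n-k)%N.+1 g x).
    by apply: DeriveDef; [exact: hg| rewrite derive1nS derive1E].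
  exact: (is_deriveZ ('C(n,k)%:R) (is_deriveM Df Dg)).
rewrite derive1E; have [_ ->] := is_derive_sum D.
exact: (pascal (fun k => derive1n k f x) (fun k => derive1n k g x)).
Qed.


Lemma Q0 (a b d c1 c2 : R) : Q a b d c1 c2 0 = a + b + d.
Proof. by rewrite /Q !mulr0 expR0 !mulr1. Qed.

Lemma key m : odd m -> 2 * (tangent_number R m / 2 ^+ m) = 1 -
  \sum_(k < m.+1) 'C(m,k)%:R *
     (if odd k && (k != m :> nat) then tangent_number R k / 2 ^+ k else 0).
Proof.
move=> om.
have P : forall k : 'I_m, 'C(m,k)%:R * (derive1n k (@tanhR R) 0 *
     derive1n (m-k) (Q 1 (1/2) (1/2) 2 (-2)) 0) =
   2^+m * ('C(m,k)%:R * (if odd k && (k != m :> nat) then tangent_number R k / 2 ^+ k else 0)).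
  move=> k; have hk := ltn_ord k.
  rewrite derive1nQ Q0 (_ : (m - k == 0)%N = false); last by rewrite subn_eq0 leqNgt hk.
  rewrite (_ : (k != m :> nat) = true); last by rewrite neq_ltn hk.
  rewrite exprNn -signr_odd oddB ?om; last exact: ltnW.
  rewrite (_ : 2 ^+ m = 2 ^+ (m-k) * 2 ^+ k :> R); last by rewrite -exprD subnK // ltnW.
  rewrite /tangent_number.
  case: (odd k) => /=; rewrite ?expr0 ?expr1.
    by field; rewrite expf_neq0 // pnatr_eq0.
  by ring.
have L := leibniz _ _ (@smooth_tanh) (smooth_Q 1 (1/2) (1/2) 2 (-2)) m 0.
rewrite tw derive1nQ Q0 big_ord_recr /= subnn derive1nQ Q0 (eq_bigr _ (fun k _ => P k)) in L.
rewrite -mulr_sumr exprNn -signr_odd om expr1 in L.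
rewrite big_ord_recr /= eqxx andbF mulr0 addr0.
move: L; set S := \sum_(i < m) _ => L.
rewrite /tangent_number; move: L; rewrite if_same binn !expr0.
set t := derive1n m (@tanhR R) 0; set q := 2 ^+ m => L.
have hq : q != 0 by rewrite expf_neq0 // pnatr_eq0.
have Lt : 2 * t = q - q * S by lra.
by rewrite mulrA Lt; field.
Qed.
End A.

Section C.
Variable R : realType.
Variable X : finType.

Lemma sum_subsets_card (S : {set X}) (F : nat -> R) :
  \sum_(E : {set X} | E \subset S) F #|E| =
  \sum_(k < #|S|.+1) 'C(#|S|, k)%:R * F k.
Proof.
rewrite (partition_big (fun E : {set X} => inord #|E| : 'I_#|S|.+1) xpredT) //=.
apply: eq_bigr => k _.
rewrite (eq_bigl (fun E => E \in [set E : {set X} | E \subset S & #|E| == k])); last first.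
  move=> E; rewrite inE; case sES: (E \subset S) => //=.
  by rewrite -(inj_eq val_inj) /= inordK // ltnS subset_leq_card.
rewrite (eq_bigr (fun _ => F k)); last by move=> E; rewrite inE => /andP[_ /eqP ->].
by rewrite sumr_const cards_draws mulr_natl.
Qed.

Lemma sum_sign (S : {set X}) :
  \sum_(E : {set X} | E \subset S) (-1) ^+ #|E| = ((S == finset.set0)%:R : R).
Proof.
rewrite (sum_subsets_card S (fun k => (-1) ^+ k)).
transitivity ((1 + (-1:R)) ^+ #|S|); last by rewrite addrN expr0n cards_eq0.
rewrite exprDn; apply: eq_bigr => i _.
by rewrite expr1n mul1r mulr_natl.
Qed.

Lemma seg_split (B C : {set X}) :
  ((segregating B C)%:R : R) =
  1 - (B :&: C == finset.set0)%:R - (B :&: ~: C == finset.set0)%:R + (B == finset.set0)%:R.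
Proof.
have -> : (B == finset.set0) = (B :&: C == finset.set0) && (B :&: ~: C == finset.set0).
  by rewrite -finset.setU_eq0 -finset.setDE finset.setID.
rewrite /segregating.
by case: (B :&: C == finset.set0); case: (B :&: ~: C == finset.set0) => /=; ring.
Qed.

Lemma sum_sign_disj (A K : {set X}) :
  \sum_(B : {set X} | B \subset A) (-1) ^+ #|B| * (B :&: K == finset.set0)%:R =
  ((A :\: K == finset.set0)%:R : R).
Proof.
rewrite -sum_sign big_mkcond [RHS]big_mkcond; apply: eq_bigr => B _.
rewrite finset.subsetD finset.setI_eq0.
by case: (B \subset A); case: [disjoint B & K] => /=; rewrite ?mulr1 ?mulr0.
Qed.

Lemma part1 (p : {set X} -> R) (A : {set X}) :
  seg_prob p A = \sum_(B : {set X} | B \subset A) (-1) ^+ #|B| * seg_prob p B.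
Proof.
rewrite /seg_prob.
under [RHS]eq_bigr => B _ do rewrite big_mkcond mulr_sumr.
rewrite exchange_big /= big_mkcond /=; apply: eq_bigr => C _.
transitivity (p C * (segregating A C)%:R); first by case: ifP; rewrite ?mulr1 ?mulr0.
rewrite (eq_bigr (fun B : {set X} => p C * ((-1) ^+ #|B| * (segregating B C)%:R))); last first.
  move=> B _; rewrite /segregating; case: ifP => _; rewrite ?mulr1 ?mulr0 //; ring.
rewrite -mulr_sumr; congr (_ * _).
under eq_bigr => B _ do rewrite seg_split !mulrDr !mulrN mulr1.
rewrite !big_split /= !sumrN sum_sign !sum_sign_disj.
rewrite (eq_bigr (fun B : {set X} => (-1) ^+ #|B| * (B :&: [set: X] == finset.set0)%:R)); last first.
  by move=> B _; rewrite finset.setIT.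
rewrite sum_sign_disj finset.setDT eqxx seg_split !finset.setDE finset.setCK.
rewrite -[true%:R]/(1%:R); ring.
Qed.

Lemma inner_reindex (c : nat -> R) (A D : {set X}) : D \subset A -> ~~ odd #|D| ->
  \sum_(B : {set X} | (D \proper B) && (B \proper A) && odd #|B|) c (#|B| - #|D|)%N =
  \sum_(k < (#|A| - #|D|).+1) 'C(#|A| - #|D|, k)%:R *
       (if odd k && (k != (#|A| - #|D|)%N :> nat) then c k else 0).
Proof.
move=> hDA hD.
pose G (B : {set X}) := if odd #|B| && (B != A) then c (#|B| - #|D|)%N else 0.
transitivity (\sum_(B : {set X} | (D \subset B) && (B \subset A)) G B).
  rewrite big_mkcond [RHS]big_mkcond; apply: eq_bigr => B _; rewrite /G.
  rewrite !finset.properEneq.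
  case: (boolP (odd #|B|)) => oB; last by rewrite !andbF; case: ifP.
  have -> : (D != B) = true by apply/eqP => E; move: oB; rewrite -E (negbTE hD).
  by rewrite eq_sym andbT /=; case: (D \subset B); case: (B \subset A); case: (A == B).
rewrite (reindex_onto (fun E => E :|: D) (fun B => B :\: D)); last first.
  move=> B /andP[hDB _]; apply/setP => x; rewrite !inE.
  by case xD: (x \in D) => //=; rewrite ?orbF // (fintype.subsetP hDB).
rewrite (eq_bigl (fun E : {set X} => E \subset A :\: D)); last first.
  move=> E; rewrite finset.subsetUr /= finset.subUset hDA andbT.
  rewrite finset.setDUl finset.setDv finset.setU0 finset.subsetD.
  by congr andb; apply/eqP/idP => /finset.setDidPl.
rewrite (eq_bigr (fun E : {set X} => (if odd #|E| && (#|E| != (#|A| - #|D|)%N) then c #|E| else 0))); last first.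
  move=> E; rewrite finset.subsetD => /andP[hEA hED]; rewrite /G.
  have hc : #|E :|: D| = (#|E| + #|D|)%N.
    by rewrite finset.cardsU (finset.disjoint_setI0 hED) finset.cards0 subn0.
  have hsub : E :|: D \subset A by rewrite finset.subUset hEA hDA.
  have hle := subset_leq_card hsub; rewrite hc in hle.
  rewrite hc addnK oddD (negbTE hD) addbF eqEcard hsub /= hc.
  have -> : (#|A| <= #|E| + #|D|)%N = (#|E| == #|A| - #|D|)%N by apply/idP/eqP; lia.
  by [].
rewrite (sum_subsets_card (A :\: D) (fun k => if odd k && (k != (#|A| - #|D|)%N) then c k else 0)) (cardsDS hDA).
by [].
Qed.

Lemma part2_gen (p : {set X} -> R) (c : nat -> R)
 (hc : forall m, odd m -> 2 * c m = 1 - \sum_(k < m.+1) 'C(m,k)%:R *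
          (if odd k && (k != m :> nat) then c k else 0)) :
 forall A : {set X}, odd #|A| -> seg_prob p A =
   \sum_(B : {set X} | (B \proper A) && ~~ odd #|B|) c (#|A| - #|B|)%N * seg_prob p B.
Proof.
move=> A; have [n] := ubnP #|A|; elim: n A => // n IH A hAn hA.
set s := seg_prob p.
have E1 : 2 * s A = \sum_(B : {set X} | B \proper A) (-1) ^+ #|B| * s B.
  have := part1 p A; rewrite (bigD1 A) //= -signr_odd hA expr1 mulN1r.
  rewrite (eq_bigl (fun B : {set X} => B \proper A)); last first.
    by move=> B; rewrite finset.properEneq andbC.
  move=> H; rewrite -/s in H; apply: (addrI (- s A)); rewrite -H; ring.
have E2 : \sum_(B : {set X} | B \proper A) (-1) ^+ #|B| * s B =
   \sum_(B : {set X} | (B \proper A) && ~~ odd #|B|) s B -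
   \sum_(B : {set X} | (B \proper A) && odd #|B|)
      \sum_(D : {set X} | (D \proper B) && ~~ odd #|D|) c (#|B| - #|D|)%N * s D.
  rewrite (bigID (fun B : {set X} => odd #|B|)) /= addrC; congr (_ + _).
    by apply: eq_bigr => B /andP[_ oB]; rewrite -signr_odd (negbTE oB) expr0 mul1r.
  rewrite -sumrN; apply: eq_bigr => B /andP[pB oB].
  rewrite -signr_odd oB expr1 mulN1r; congr (- _).
  apply: IH => //; apply: leq_trans (proper_card pB) _; by rewrite -ltnS.
have E3 : \sum_(B : {set X} | (B \proper A) && odd #|B|)
      \sum_(D : {set X} | (D \proper B) && ~~ odd #|D|) c (#|B| - #|D|)%N * s D =
   \sum_(D : {set X} | (D \proper A) && ~~ odd #|D|) s D *
      \sum_(B : {set X} | (D \proper B) && (B \proper A) && odd #|B|) c (#|B| - #|D|)%N.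
  rewrite (exchange_big_dep (fun D : {set X} => (D \proper A) && ~~ odd #|D|)) /=; last first.
    by move=> B D /andP[pBA _] /andP[pDB ->]; rewrite (proper_trans pDB pBA).
  apply: eq_bigr => D /andP[_ eD]; rewrite mulr_sumr; apply: eq_big => [B|B _]; last by rewrite mulrC.
  by rewrite eD andbT; case: (B \proper A); case: (D \proper B); case: (odd #|B|).
apply: (@mulfI _ 2); first by rewrite pnatr_eq0. rewrite E1 E2 E3 mulr_sumr -sumrB; apply: eq_bigr.
move=> D /andP[pDA eD].
have hDA := proper_sub pDA.
rewrite (inner_reindex c A D hDA eD) mulrA hc; first ring.
by rewrite oddB ?hA ?(negbTE eD) // subset_leq_card.
Qed.
End C.

Theorem theorem1 (R : realType) (X : finType) (p : {set X} -> R)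
  (p_ge0 : forall B : {set X}, 0 <= p B)
  (p_sum1 : \sum_(B : {set X}) p B = 1) :
  (forall A : {set X},
     seg_prob p A = \sum_(B : {set X} | B \subset A) (-1) ^+ #|B| * seg_prob p B) /\
  (forall A : {set X}, odd #|A| ->
     seg_prob p A =
       \sum_(B : {set X} | (B \proper A) && ~~ odd #|B|)
          (tangent_number R (#|A| - #|B|)%N / 2 ^+ (#|A| - #|B|)%N) * seg_prob p B).
Proof.
split; first exact: part1.
move=> A hA.
exact: (@part2_gen R X p (fun m => tangent_number R m / 2 ^+ m) (@key R) A hA).
Qed.
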